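(* Let $S$ be a $d\times d$ symmetric positive semidefinite matrix with $S_{ii}>0$ for all $i$. For any $\rho>0$, the graphical lasso problem of minimizing $-\log\det K+\operatorname{tr}(SK)+\rho\sum_{i\ne j}|K_{ij}|$ over positive definite $K$ has an optimum, and it is unique. More generally, for symmetric $L,U$ with entries in $\mathbb{R}\cup\{\pm\infty\}$, $L_{ii}=U_{ii}=0$ and $L_{ij}<0<U_{ij}$ for all $i\ne j$, the problem of minimizing $-\log\det K+\operatorname{tr}(SK)+\sum_{i\neq j}\max\{L_{ij}K_{ij},U_{ij}K_{ij}\}$ over positive definite $K$ (convention $\pm\infty\cdot0=0$) has a unique optimum. *)

(* Defs.v *)
From HB Require Import structures.
From mathcomp Require Import all_boot all_order all_algebra.
From mathcomp Require Import classical_sets reals constructive_ereal ereal exp.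
Set Implicit Arguments. Unset Strict Implicit. Unset Printing Implicit Defensive.
Import Order.TTheory GRing.Theory Num.Theory.
Local Open Scope ring_scope.

Definition psdmx (R : realType) (d : nat) (A : 'M[R]_d) : Prop :=
  A^T = A /\ forall x : 'cV[R]_d, 0 <= (x^T *m A *m x) 0 0.

Definition pdmx (R : realType) (d : nat) (A : 'M[R]_d) : Prop :=
  A^T = A /\ forall x : 'cV[R]_d, x != 0 -> 0 < (x^T *m A *m x) 0 0.

Definition glasso_obj (R : realType) (d : nat) (S : 'M[R]_d) (rho : R)
    (K : 'M[R]_d) : R :=
  - ln (\det K) + \tr (S *m K)
  + rho * \sum_(i < d) \sum_(j < d | i != j) `|K i j|.

(* generalized objective: -log det K + tr(SK) + sum_{i<>j} max(L_ij K_ij, U_ij K_ij),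
   computed in \bar R; MathComp's ereal product satisfies (+-oo) * 0 = 0. *)
Definition gen_obj (R : realType) (d : nat) (S : 'M[R]_d)
    (L U : 'M[\bar R]_d) (K : 'M[R]_d) : \bar R :=
  ((- ln (\det K) + \tr (S *m K))%:E
   + \sum_(i < d) \sum_(j < d | i != j)
       maxe (L i j * (K i j)%:E) (U i j * (K i j)%:E))%E.

(* Main.v *)
Require Import Defs.
From HB Require Import structures.
From mathcomp Require Import all_boot all_order all_algebra.
From mathcomp Require Import classical_sets reals constructive_ereal ereal exp.
From mathcomp Require Import all_classical all_reals all_analysis.
From mathcomp Require Import ring lra.
Import Order.TTheory GRing.Theory Num.Theory.
Import numFieldNormedType.Exports.
Set Implicit Arguments. Unset Strict Implicit. Unset Printing Implicit Defensive.
Local Open Scope classical_set_scope.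
Local Open Scope ring_scope.

Lemma mxDE (R : realType) m n (A B : 'M[R]_(m,n)) i j : (A + B) i j = A i j + B i j.
Proof. by rewrite mxE. Qed.
Lemma mxBE (R : realType) m n (A B : 'M[R]_(m,n)) i j : (A - B) i j = A i j - B i j.
Proof. by rewrite !mxE. Qed.
Lemma mxNE (R : realType) m n (A : 'M[R]_(m,n)) i j : (- A) i j = - A i j.
Proof. by rewrite mxE. Qed.
Lemma mxZE (R : realType) m n (c : R) (A : 'M[R]_(m,n)) i j : (c *: A) i j = c * A i j.
Proof. by rewrite mxE. Qed.
Lemma mx11E (R : realType) (c : R) : (c%:M : 'M[R]_1) ord0 ord0 = c.
Proof. by rewrite mxE eqxx mulr1n. Qed.

Lemma schur_qf (R : realType) n (a0 : R) (b : 'rV[R]_n) (D : 'M[R]_n) (x : 'cV[R]_n) :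
  a0 != 0 ->
  let beta := (b *m x) ord0 ord0 in
  let y := col_mx (- (a0^-1 * beta))%:M x : 'cV[R]_(1 + n) in
  (y^T *m block_mx a0%:M b b^T D *m y) ord0 ord0 =
  (x^T *m (D - a0^-1 *: (b^T *m b)) *m x) ord0 ord0.
Proof.
move=> a0n0 beta y.
have hb : (b *m x) = beta%:M by rewrite [LHS]mx11_scalar.
have hb' : x^T *m b^T = beta%:M by rewrite -trmx_mul hb tr_scalar_mx.
rewrite /y tr_col_mx tr_scalar_mx mul_row_block mul_row_col.
rewrite !mulmxBr !mulmxBl -!scalemxAr -!scalemxAl mulmxDl hb'.
rewrite !mul_mx_scalar !mul_scalar_mx mulmxDl -!mulmxA hb mul_mx_scalar.
rewrite -scalemxAl -scalemxAr hb hb'.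
rewrite !(mxDE, mxBE, mxNE, mxZE, mx11E) -/beta.
by field.
Qed.
Lemma qf_delta (R : realType) n (K : 'M[R]_n) (i : 'I_n) :
  ((delta_mx i (ord0 : 'I_1))^T *m K *m delta_mx i (ord0 : 'I_1)) ord0 ord0 = K i i.
Proof. by rewrite trmx_delta -rowE -colE !mxE. Qed.

Lemma delta_neq0 (R : realType) n (i : 'I_n) : (delta_mx i ord0 : 'cV[R]_n) != 0.
Proof. by apply/eqP => /matrixP /(_ i 0); rewrite !mxE !eqxx => /eqP; rewrite oner_eq0. Qed.

Lemma pd_diag_gt0 (R : realType) n (K : 'M[R]_n) : pdmx K -> forall i, 0 < K i i.
Proof. by move=> [_ hK] i; rewrite -qf_delta; apply: hK; apply: delta_neq0. Qed.

Lemma block_sym (R : realType) n (K : 'M[R]_(1 + n)) : K^T = K ->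
  K = block_mx (K ord0 ord0)%:M (ursubmx K) (ursubmx K)^T (drsubmx K).
Proof.
move=> sK; rewrite -{1}[K]submxK; congr block_mx.
- rewrite [LHS]mx11_scalar; congr (_%:M); rewrite !mxE; congr (K _ _); exact: val_inj.
- by rewrite trmx_ursub sK.
Qed.

Lemma chol (R : realType) n (K : 'M[R]_n) : pdmx K ->
  exists T : 'M[R]_n, [/\ is_trig_mx T, forall i, 0 < T i i & K = T *m T^T].
Proof.
elim: n K => [|n IH] K hK.
  by exists 0; split; [apply/is_trig_mxP => -[] | case | apply/matrixP => -[]].
suff step : forall K' : 'M[R]_(1 + n), pdmx K' ->
    exists T : 'M[R]_(1+n), [/\ is_trig_mx T, forall i, 0 < T i i & K' = T *m T^T].
  exact: step.
clear K hK => K hK.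
have Kb := block_sym hK.1.
have a0p : 0 < K ord0 ord0 := pd_diag_gt0 hK ord0.
move: Kb hK a0p; set a0 := K ord0 ord0; set b := ursubmx K; set D := drsubmx K.
move=> Kb hK a0p.
have DT : D^T = D.
  have := hK.1; rewrite Kb tr_block_mx => /eq_block_mx [_ _ _ ->] //.
have hC : pdmx (D - a0^-1 *: (b^T *m b)).
  split.
    by rewrite linearB /= linearZ /= trmx_mul trmxK DT.
  move=> x xn0; rewrite -schur_qf ?gt_eqF //.
  rewrite -Kb; apply: hK.2.
  by rewrite col_mx_eq0 negb_and xn0 orbT.
have [T' [T'tr T'pos T'E]] := IH _ hC.
set s := Num.sqrt a0.
have sp : 0 < s by rewrite sqrtr_gt0.
have ss : s * s = a0 by rewrite -expr2 sqr_sqrtr // ltW.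
exists (block_mx s%:M 0 (s^-1 *: b^T) T').
split.
- by rewrite is_trig_block_mx // eqxx scalar_mx_is_trig T'tr.
- move=> i; case: (split_ordP i) => j ->; last by rewrite block_mxEdr.
  by rewrite block_mxEul (ord1 j) mx11E.
- rewrite tr_block_mx mulmx_block {1}Kb !trmx0 !mulmx0 !mul0mx !addr0.
  rewrite tr_scalar_mx -scalar_mxM ss linearZ /= trmxK mul_scalar_mx mul_mx_scalar.
  rewrite !scalerA mulfV ?gt_eqF // !scale1r -scalemxAl -scalemxAr scalerA -T'E.
  by rewrite -invfM ss addrC subrK.
Qed.
Lemma ln_prod (R : realType) (I : finType) (f : I -> R) :
  (forall i, 0 < f i) -> ln (\prod_i f i) = \sum_i ln (f i).
Proof.
move=> fp.
suff [] : 0 < \prod_i f i /\ ln (\prod_i f i) = \sum_i ln (f i) by [].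
elim/big_rec2: _ => [|i y1 y2 _ [y1p <-]]; first by rewrite ln1.
by split; [rewrite mulr_gt0 | rewrite lnM // posrE].
Qed.

Lemma ln_le_sub1 (R : realType) (y : R) : 0 < y -> ln y <= y - 1.
Proof.
move=> yp; have := @le_ln1Dx R (y - 1); rewrite addrCA subrr addr0; apply.
lra.
Qed.

Lemma ln_eq_sub1 (R : realType) (y : R) : 0 < y -> ln y = y - 1 -> y = 1.
Proof.
move=> yp heq; apply/eqP; apply: contraTT isT => yn1; exfalso.
set r := Num.sqrt y.
have rp : 0 < r by rewrite sqrtr_gt0.
have rr : r * r = y by rewrite -expr2 sqr_sqrtr // ltW.
have rn1 : r != 1 by apply: contraNN yn1 => /eqP r1; rewrite -rr r1 mulr1.
have : ln y <= 2 * (r - 1).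
  rewrite -rr lnM ?posrE //; have := ln_le_sub1 rp; lra.
rewrite heq -rr => h.
have : 0 < (r - 1) ^+ 2 by rewrite exprn_even_gt0 // subr_eq0.
rewrite expr2; nra.
Qed.

Lemma chol_diag (R : realType) n (T : 'M[R]_n) i :
  (T *m T^T) i i = \sum_k T i k ^+ 2.
Proof. by rewrite mxE; apply: eq_bigr => k _; rewrite mxE expr2. Qed.

Lemma det_chol (R : realType) n (T : 'M[R]_n) : is_trig_mx T ->
  \det (T *m T^T) = \prod_i (T i i ^+ 2).
Proof.
move=> Ttr; rewrite det_mulmx det_tr det_trig // -big_split /=.
by apply: eq_bigr => i _; rewrite expr2.
Qed.

Lemma pd_det_gt0 (R : realType) n (K : 'M[R]_n) : pdmx K -> 0 < \det K.
Proof.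
move=> /chol [T [Ttr Tp ->]]; rewrite det_chol //.
by apply: prodr_gt0 => i _; rewrite exprn_gt0.
Qed.

Lemma trace_sum (R : realType) n (N : 'M[R]_n) : \tr N = \sum_i N i i.
Proof. by []. Qed.

Lemma key_ineq (R : realType) n (N : 'M[R]_n) : pdmx N ->
  ln (\det N) <= \tr N - n%:R /\ (ln (\det N) = \tr N - n%:R -> N = 1%:M).
Proof.
move=> hN; have Np := pd_diag_gt0 hN.
have [T [Ttr Tp NE]] := chol hN.
have hd i : T i i ^+ 2 <= N i i.
  rewrite NE chol_diag (bigD1 i) //= lerDl; apply: sumr_ge0 => k _.
  exact: sqr_ge0.
have Tp2 i : 0 < T i i ^+ 2 by rewrite exprn_gt0.
have lndet : ln (\det N) = \sum_i ln (T i i ^+ 2).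
  by rewrite {1}NE det_chol // ln_prod.
have trE : \tr N - n%:R = \sum_i (N i i - 1).
  by rewrite trace_sum sumrB sumr_const card_ord.
have hi i : ln (T i i ^+ 2) <= ln (N i i) /\ ln (N i i) <= N i i - 1.
  by split; [rewrite ler_ln ?posrE | apply: ln_le_sub1].
rewrite lndet trE; split.
  by apply: ler_sum => i _; have [h1 h2] := hi i; exact: le_trans h1 h2.
move=> /esym/eqP; rewrite -subr_eq0 -sumrB => /eqP /psumr_eq0P h0.
have {}h0 : forall i, N i i - 1 - ln (T i i ^+ 2) = 0.
  move=> i; apply: h0 => // j _; have [h1 h2] := hi j; lra.
have h0' i : ln (T i i ^+ 2) = ln (N i i) /\ ln (N i i) = N i i - 1.
  have [h1 h2] := hi i; have := h0 i; lra.
have N1 i : N i i = 1 by apply: ln_eq_sub1 => //; exact: (h0' i).2.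
have TN i : T i i ^+ 2 = N i i by apply: ln_inj; rewrite ?posrE //; exact: (h0' i).1.
have T0 i k : k != i -> T i k = 0.
  move=> ki; have := TN i; rewrite NE chol_diag (bigD1 i) //= => /eqP.
  rewrite -subr_eq0 opprD addNKr oppr_eq0 => /eqP /psumr_eq0P h.
  have : T i k ^+ 2 = 0 by apply: h => // j _; exact: sqr_ge0.
  by move/eqP; rewrite expf_eq0 /= => /eqP.
apply/matrixP => i j; rewrite NE mxE (bigD1 i) //= big1 ?addr0; last first.
  by move=> k ki; rewrite T0 ?mul0r.
rewrite !mxE; have [<-|ij] := eqVneq i j.
  by rewrite -expr2 TN N1.
by rewrite (T0 j i) ?mulr0.
Qed.

Lemma qfDE (R : realType) n (A B : 'M[R]_n) (x : 'cV[R]_n) :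
  (x^T *m (A + B) *m x) ord0 ord0 = (x^T *m A *m x) ord0 ord0 + (x^T *m B *m x) ord0 ord0.
Proof. by rewrite mulmxDr mulmxDl mxDE. Qed.

Lemma qfZE (R : realType) n (c : R) (A : 'M[R]_n) (x : 'cV[R]_n) :
  (x^T *m (c *: A) *m x) ord0 ord0 = c * (x^T *m A *m x) ord0 ord0.
Proof. by rewrite -scalemxAr -scalemxAl mxZE. Qed.

Lemma pd_mid (R : realType) n (A B : 'M[R]_n) : pdmx A -> pdmx B ->
  pdmx (2^-1 *: (A + B)).
Proof.
move=> [sA hA] [sB hB]; split.
  by rewrite linearZ /= linearD /= sA sB.
move=> x xn0; rewrite qfZE qfDE; apply: mulr_gt0; first by rewrite invr_gt0.
by rewrite addr_gt0 ?hA ?hB.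
Qed.

Lemma congr_pd (R : realType) n (A P : 'M[R]_n) : pdmx A -> P \in unitmx ->
  pdmx (P *m A *m P^T).
Proof.
move=> [sA hA] Pu; split.
  by rewrite !trmx_mul trmxK sA mulmxA.
move=> x xn0.
have -> : x^T *m (P *m A *m P^T) *m x = (P^T *m x)^T *m A *m (P^T *m x).
  by rewrite trmx_mul trmxK !mulmxA.
apply: hA; apply: contraNneq xn0 => h.
have PTu : P^T \in unitmx by rewrite unitmx_tr.
by rewrite -(mulKmx PTu x) h mulmx0.
Qed.

Lemma logdet_strict (R : realType) n (A B : 'M[R]_n) : pdmx A -> pdmx B -> A != B ->
  ln (\det A) + ln (\det B) < 2 * ln (\det (2^-1 *: (A + B))).
Proof.
move=> hA hB AB.
have hM := pd_mid hA hB.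
have [T [Ttr Tp ME]] := chol hM.
have dTp : 0 < \det T by rewrite det_trig //; apply: prodr_gt0 => i _.
have Tu : T \in unitmx by rewrite unitmxE unitfE gt_eqF.
set Ti := invmx T.
have Tiu : Ti \in unitmx by rewrite unitmx_inv.
have TTi : T *m Ti = 1%:M by rewrite mulmxV.
have back (C : 'M[R]_n) : T *m (Ti *m C *m Ti^T) *m T^T = C.
  by rewrite !mulmxA TTi mul1mx -mulmxA -trmx_mul TTi trmx1 mulmx1.
have sumN : Ti *m A *m Ti^T + Ti *m B *m Ti^T = 2%:R *: 1%:M.
  rewrite -mulmxDl -mulmxDr.
  have -> : A + B = 2%:R *: (2^-1 *: (A + B)) by rewrite scalerA divff ?scale1r // pnatr_eq0.
  by rewrite ME -scalemxAr -scalemxAl !mulmxA -/Ti mulVmx // mul1mx -trmx_mul mulVmx // trmx1.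
have hNA := congr_pd hA Tiu; have hNB := congr_pd hB Tiu.
have [kA1 kA2] := key_ineq hNA; have [kB1 kB2] := key_ineq hNB.
have trS : \tr (Ti *m A *m Ti^T) + \tr (Ti *m B *m Ti^T) = 2 * n%:R.
  by rewrite -mxtraceD sumN mxtraceZ mxtrace1.
have dTi : \det Ti = (\det T)^-1 by rewrite det_inv.
have lnN (C : 'M[R]_n) : pdmx C -> ln (\det (Ti *m C *m Ti^T)) = ln (\det C) - 2 * ln (\det T).
  move=> hC; have dCp := pd_det_gt0 hC.
  rewrite !det_mulmx det_tr dTi lnM ?posrE ?mulr_gt0 ?invr_gt0 //.
  by rewrite lnM ?posrE ?invr_gt0 // lnV ?posrE //; lra.
have lnM2 : ln (\det (2^-1 *: (A + B))) = 2 * ln (\det T).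
  by rewrite ME det_mulmx det_tr lnM ?posrE //; lra.
have strictA : ln (\det (Ti *m A *m Ti^T)) < \tr (Ti *m A *m Ti^T) - n%:R.
  rewrite lt_neqAle kA1 andbT; apply/eqP => /kA2 NA1.
  have NB1 : Ti *m B *m Ti^T = 1%:M.
    by apply: (@addrI _ (Ti *m A *m Ti^T)); rewrite sumN NA1 scaler_nat mulr2n.
  move: AB; rewrite -(back A) -(back B) NA1 NB1 eqxx //.
rewrite lnM2; move: strictA kB1; rewrite !lnN //; lra.
Qed.

Lemma qf_sym (R : realType) n (K : 'M[R]_n) (x y : 'cV[R]_n) : K^T = K ->
  (x^T *m K *m y) ord0 ord0 = (y^T *m K *m x) ord0 ord0.
Proof.
move=> sK; rewrite -[in LHS]sK.
have -> : x^T *m K^T *m y = (y^T *m K *m x)^T by rewrite !trmx_mul trmxK mulmxA.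
by rewrite mxE.
Qed.

Lemma qf_add (R : realType) n (K : 'M[R]_n) (x y : 'cV[R]_n) (t : R) : K^T = K ->
  ((x + t *: y)^T *m K *m (x + t *: y)) ord0 ord0 =
  (x^T *m K *m x) ord0 ord0 + 2 * t * (y^T *m K *m x) ord0 ord0
  + t ^+ 2 * (y^T *m K *m y) ord0 ord0.
Proof.
move=> sK.
have -> : (x + t *: y)^T = x^T + t *: y^T by rewrite linearD /= linearZ.
rewrite !mulmxDl !mulmxDr -!scalemxAl -!scalemxAr !(mxDE, mxZE) (qf_sym x y sK); ring.
Qed.

Lemma psd_qf0 (R : realType) n (K : 'M[R]_n) (x : 'cV[R]_n) : psdmx K ->
  (x^T *m K *m x) ord0 ord0 = 0 -> K *m x = 0.
Proof.
move=> [sK hK] q0; apply/matrixP => i j; rewrite (ord1 j) [RHS]mxE.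
set y : 'cV[R]_n := delta_mx i ord0.
have hy : (y^T *m K *m x) ord0 ord0 = (K *m x) i ord0.
  by rewrite /y trmx_delta -mulmxA -rowE mxE.
rewrite -hy; set b : R := (y^T *m K *m x) ord0 ord0; set c : R := (y^T *m K *m y) ord0 ord0.
have c0 : 0 <= c by apply: hK.
have := hK (x + (- b / (1 + c)) *: y); rewrite qf_add // q0 add0r -/b -/c.
have h1c : 0 < 1 + c by lra.
move=> h; suff : b ^+ 2 <= 0.
  by rewrite le_eqVlt ltNge sqr_ge0 orbF sqrf_eq0 => /eqP.
have e : 2 * (- b / (1 + c)) * b + (- b / (1 + c)) ^+ 2 * c
        = - (b ^+ 2) * (2 + c) / (1 + c) ^+ 2.
  by field; rewrite gt_eqF.
move: h; rewrite e => h.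
have : 0 <= - (b ^+ 2) * (2 + c) by move: h; rewrite pmulr_lge0 // invr_gt0 exprn_gt0.
rewrite mulNr oppr_ge0 pmulr_lle0 //; by apply: (lt_le_trans (_ : 0 < 2)); rewrite ?lerDl.
Qed.

Lemma qf_delta2 (R : realType) n (K : 'M[R]_n) (i j : 'I_n) :
  ((delta_mx i (ord0 : 'I_1))^T *m K *m delta_mx j (ord0 : 'I_1)) ord0 ord0 = K i j.
Proof. by rewrite trmx_delta -rowE -colE !mxE. Qed.

Lemma psd_det_pd (R : realType) n (K : 'M[R]_n) : psdmx K -> \det K != 0 -> pdmx K.
Proof.
move=> hK d0; split; first exact: hK.1.
move=> x xn0; rewrite lt_neqAle hK.2 andbT; apply/eqP => /esym /(psd_qf0 hK) Kx0.
have Ku : K \in unitmx by rewrite unitmxE unitfE.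
by move: xn0; rewrite -(mulKmx Ku x) Kx0 mulmx0 eqxx.
Qed.

Lemma pd_psd (R : realType) n (K : 'M[R]_n) : pdmx K -> psdmx K.
Proof.
move=> [sK hK]; split => // x; have [->|xn0] := eqVneq x 0.
  by rewrite mulmx0 mxE.
exact/ltW/hK.
Qed.

Lemma psd_diag_ge0 (R : realType) n (K : 'M[R]_n) i : psdmx K -> 0 <= K i i.
Proof. by move=> [_ hK]; rewrite -qf_delta2. Qed.

Lemma psd_offdiag (R : realType) n (K : 'M[R]_n) i j : psdmx K ->
  `|K i j| <= (K i i + K j j) / 2.
Proof.
move=> [sK hK].
have h (t : R) : 0 <= K i i + 2 * t * K j i + t ^+ 2 * K j j.
  have := hK (delta_mx i ord0 + t *: delta_mx j ord0).
  by rewrite qf_add // !qf_delta2.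
have hji : K j i = K i j by rewrite -[in LHS]sK mxE.
have h1 := h 1; have h2 := h (-1); rewrite hji in h1 h2.
rewrite expr1n mul1r mulr1 in h1; rewrite sqrrN expr1n mul1r mulrN1 in h2.
rewrite ler_norml; apply/andP; split; lra.
Qed.

Lemma trace_psd_pd (R : realType) n (P K : 'M[R]_n) : psdmx P -> pdmx K ->
  0 <= \tr (P *m K).
Proof.
move=> hP /chol [T [_ _ ->]].
rewrite mulmxA mxtrace_mulC trace_sum; apply: sumr_ge0 => i _.
rewrite -qf_delta2.
have -> : (delta_mx i (ord0 : 'I_1))^T *m (T^T *m (P *m T)) *m delta_mx i (ord0 : 'I_1)
   = (T *m delta_mx i (ord0 : 'I_1))^T *m P *m (T *m delta_mx i (ord0 : 'I_1)).
  by rewrite trmx_mul !mulmxA.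
exact: hP.2.
Qed.

Lemma hadamard_ln (R : realType) n (K : 'M[R]_n) : pdmx K ->
  ln (\det K) <= \sum_i ln (K i i).
Proof.
move=> hK; have Kp := pd_diag_gt0 hK.
have [T [Ttr Tp KE]] := chol hK.
have hd i : T i i ^+ 2 <= K i i.
  rewrite KE chol_diag (bigD1 i) //= lerDl; apply: sumr_ge0 => k _.
  exact: sqr_ge0.
rewrite {1}KE det_chol // ln_prod => [|i]; last by rewrite exprn_gt0.
by apply: ler_sum => i _; rewrite ler_ln ?posrE ?exprn_gt0.
Qed.

Definition pen (R : realType) d (a b : 'I_d -> 'I_d -> R) (K : 'M[R]_d) : R :=
  \sum_(i < d) \sum_(j < d | i != j) (a i j * Num.max (K i j) 0 + b i j * Num.max (- K i j) 0).

Definition Fr (R : realType) d (S : 'M[R]_d) (a b : 'I_d -> 'I_d -> R) (K : 'M[R]_d) : R :=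
  - ln (\det K) + \tr (S *m K) + pen a b K.

Definition inC (R : realType) d (pu pl : 'I_d -> 'I_d -> bool) (K : 'M[R]_d) : Prop :=
  forall i j, i != j -> (pu i j -> K i j <= 0) /\ (pl i j -> 0 <= K i j).

Lemma trace_expand (R : realType) d (S K : 'M[R]_d) :
  \tr (S *m K) = \sum_i (S i i * K i i + \sum_(j | i != j) S i j * K j i).
Proof.
rewrite trace_sum; apply: eq_bigr => i _; rewrite mxE (bigD1 i) //=.
by congr (_ + _); apply: eq_bigl => j; rewrite eq_sym.
Qed.

Lemma pen_term (R : realType) (t s a b k : R) : 0 < a -> 0 < b ->
  t * `|s| <= a -> t * `|s| <= b -> 0 <= t ->
  0 <= t * s * k + (a * Num.max k 0 + b * Num.max (- k) 0).
Proof.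
move=> ap bp ha hb t0.
have hs : - `|s| <= s <= `|s| by rewrite -ler_norml.
case/orP: (le_total 0 k) => hk.
  rewrite (max_idPl hk) (max_idPr (_ : - k <= 0)); last by rewrite oppr_le0.
  have : 0 <= (t * s + a) * k.
    apply: mulr_ge0 => //; move: hs => /andP [h1 _].
    have : - (t * `|s|) <= t * s by rewrite -mulrN ler_wpM2l.
    lra.
  lra.
rewrite (max_idPr hk) (max_idPl (_ : 0 <= - k)); last by rewrite oppr_ge0.
have : 0 <= (b - t * s) * (- k).
  apply: mulr_ge0; last by rewrite oppr_ge0.
  move: hs => /andP [_ h2].
  have : t * s <= t * `|s| by rewrite ler_wpM2l.
  lra.
lra.
Qed.

Lemma coerc (R : realType) d (S : 'M[R]_d) (a b : 'I_d -> 'I_d -> R) (t : R)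
  (hS : psdmx S) (ap : forall i j, 0 < a i j) (bp : forall i j, 0 < b i j)
  (t0 : 0 <= t) (t1 : t <= 1)
  (ta : forall i j, t * `|S i j| <= a i j) (tb : forall i j, t * `|S i j| <= b i j)
  (K : 'M[R]_d) : pdmx K ->
  \sum_i t * S i i * K i i <= \tr (S *m K) + pen a b K.
Proof.
move=> hK; have htr := trace_psd_pd hS hK.
have sK : forall i j, K j i = K i j by move=> i j; rewrite -{1}hK.1 mxE.
apply: le_trans (_ : t * \tr (S *m K) + pen a b K <= _); last first.
  by rewrite lerD2r; rewrite -[leRHS]mul1r ler_wpM2r.
rewrite trace_expand /pen mulr_sumr -big_split /=; apply: ler_sum => i _.
rewrite mulrDr mulr_sumr -addrA -big_split /= mulrA lerDl.
apply: sumr_ge0 => j _; rewrite sK mulrA; exact: pen_term.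
Qed.

Lemma le_sum_term (R : realType) d (F : 'I_d -> 'I_d -> R) i j :
  (forall i j, 0 <= F i j) -> F i j <= \sum_i0 \sum_j0 F i0 j0.
Proof.
move=> F0; rewrite (bigD1 i) //= (bigD1 j) //=.
have h1 : 0 <= \sum_(j0 | j0 != j) F i j0 by apply: sumr_ge0.
have h2 : 0 <= \sum_(i0 | i0 != i) \sum_j0 F i0 j0 by apply: sumr_ge0 => *; apply: sumr_ge0.
lra.
Qed.

Lemma exists_t (R : realType) d (S : 'M[R]_d) (a b : 'I_d -> 'I_d -> R)
  (ap : forall i j, 0 < a i j) (bp : forall i j, 0 < b i j) :
  exists t : R, [/\ 0 < t, t <= 1, (forall i j, t * `|S i j| <= a i j)
    & (forall i j, t * `|S i j| <= b i j)].
Proof.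
set F := fun i j => `|S i j| / a i j + `|S i j| / b i j.
have F0 i j : 0 <= F i j by rewrite /F addr_ge0 // divr_ge0 // ltW.
set s := \sum_i \sum_j F i j.
have s0 : 0 <= s by apply: sumr_ge0 => *; apply: sumr_ge0.
have sp : 0 < 1 + s by lra.
exists (1 + s)^-1; split.
- by rewrite invr_gt0.
- by rewrite invr_le1 ?unitfE ?gt_eqF //; lra.
- move=> i j; rewrite mulrC ler_pdivrMr //.
  have := le_sum_term i j F0; rewrite -/s /F => h.
  have : `|S i j| / a i j <= s by have := divr_ge0 (normr_ge0 (S i j)) (ltW (bp i j)); lra.
  rewrite ler_pdivrMr // => h'; have := ap i j; have := bp i j; nra.
- move=> i j; rewrite mulrC ler_pdivrMr //.
  have := le_sum_term i j F0; rewrite -/s /F => h.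
  have : `|S i j| / b i j <= s by have := divr_ge0 (normr_ge0 (S i j)) (ltW (ap i j)); lra.
  rewrite ler_pdivrMr // => h'; have := ap i j; have := bp i j; nra.
Qed.

Lemma ln_bound (R : realType) (mu x : R) : 0 < mu -> 0 < x -> ln x <= mu * x - 1 - ln mu.
Proof.
move=> mp xp; have := ln_le_sub1 (mulr_gt0 mp xp); rewrite lnM ?posrE //; lra.
Qed.

Lemma Fr_lower (R : realType) d (S : 'M[R]_d) (a b : 'I_d -> 'I_d -> R) (t : R)
  (hS : psdmx S) (hdiag : forall i, 0 < S i i)
  (ap : forall i j, 0 < a i j) (bp : forall i j, 0 < b i j)
  (t0 : 0 < t) (t1 : t <= 1)
  (ta : forall i j, t * `|S i j| <= a i j) (tb : forall i j, t * `|S i j| <= b i j)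
  (K : 'M[R]_d) : pdmx K ->
  \sum_i (t * S i i / 2 * K i i) + \sum_i (1 + ln (t * S i i / 2)) <= Fr S a b K
  /\ - ln (\det K) <= Fr S a b K.
Proof.
move=> hK; have Kp := pd_diag_gt0 hK.
have hc := coerc hS ap bp (ltW t0) t1 ta tb hK.
have hh := hadamard_ln hK.
have cp i : 0 < t * S i i / 2 by rewrite divr_gt0 // mulr_gt0.
have hsum0 : 0 <= \sum_i t * S i i * K i i.
  by apply: sumr_ge0 => i _; rewrite mulr_ge0 // ?mulr_ge0 // ltW.
rewrite /Fr; split; last by lra.
have hl : \sum_i ln (K i i) <= \sum_i (t * S i i / 2 * K i i - 1 - ln (t * S i i / 2)).
  by apply: ler_sum => i _; apply: ln_bound.
have e1 : \sum_i (t * S i i / 2 * K i i - 1 - ln (t * S i i / 2)) =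
   \sum_i (t * S i i / 2 * K i i) - \sum_i (1 + ln (t * S i i / 2)).
  by rewrite -sumrB; apply: eq_bigr => i _; ring.
have e2 : \sum_i t * S i i * K i i = 2 * \sum_i (t * S i i / 2 * K i i).
  by rewrite mulr_sumr; apply: eq_bigr => i _; field.
lra.
Qed.

Lemma cont_sum (R : realType) (T : topologicalType) (I : Type) (r : seq I) (P : pred I)
  (F : I -> T -> R) : (forall i, continuous (F i)) ->
  continuous (fun x => \sum_(i <- r | P i) F i x).
Proof.
move=> hF; apply: (continuous_big (op := +%R) (@add_continuous R)) => i _; exact: hF.
Qed.

Lemma cont_prod (R : realType) (T : topologicalType) (I : Type) (r : seq I) (P : pred I)
  (F : I -> T -> R) : (forall i, continuous (F i)) ->
  continuous (fun x => \prod_(i <- r | P i) F i x).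
Proof.
move=> hF.
have hm : continuous (fun x : R * R => x.1 * x.2) by exact: mul_continuous.
apply: (continuous_big hm) => i _; exact: hF.
Qed.

Lemma cont_cst (R : realType) (T : topologicalType) (c : R) : continuous (fun _ : T => c).
Proof. by move=> x; exact: cvg_cst. Qed.

Lemma cont_add (R : realType) (T : topologicalType) (f g : T -> R) :
  continuous f -> continuous g -> continuous (fun x => f x + g x).
Proof. by move=> hf hg x; apply: cvgD; [exact: hf | exact: hg]. Qed.

Lemma cont_mul (R : realType) (T : topologicalType) (f g : T -> R) :
  continuous f -> continuous g -> continuous (fun x => f x * g x).
Proof. by move=> hf hg x; apply: cvgM; [exact: hf | exact: hg]. Qed.

Lemma cont_opp (R : realType) (T : topologicalType) (f : T -> R) :
  continuous f -> continuous (fun x => - f x).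
Proof. by move=> hf x; apply: cvgN; exact: hf. Qed.

Lemma cont_max (R : realType) (T : topologicalType) (f g : T -> R) :
  continuous f -> continuous g -> continuous (fun x => Num.max (f x) (g x)).
Proof. by move=> hf hg x; apply: (@continuous_max R T f g x); [exact: hf | exact: hg]. Qed.

Lemma cont_det (R : realType) (T : topologicalType) n (M : T -> 'M[R]_n) :
  (forall i j, continuous (fun x => M x i j)) -> continuous (fun x => \det (M x)).
Proof.
move=> hM; rewrite /determinant.
apply: cont_sum => s x.
apply: cvgM; first exact: cvg_cst.
by apply: cont_prod => i; exact: hM.
Qed.

Lemma cont_mulmxl (R : realType) (T : topologicalType) m n p (A : 'M[R]_(m, n))
  (M : T -> 'M[R]_(n, p)) :
  (forall i j, continuous (fun x => M x i j)) ->
  forall i j, continuous (fun x => (A *m M x) i j).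
Proof.
move=> hM i j.
have -> : (fun x => (A *m M x) i j) = (fun x => \sum_k A i k * M x k j).
  by apply/funext => x; rewrite mxE.
by apply: cont_sum => k; apply: cont_mul; [exact: cont_cst | exact: hM].
Qed.

Lemma cont_mulmxr (R : realType) (T : topologicalType) m n p (B : 'M[R]_(n, p))
  (M : T -> 'M[R]_(m, n)) :
  (forall i j, continuous (fun x => M x i j)) ->
  forall i j, continuous (fun x => (M x *m B) i j).
Proof.
move=> hM i j.
have -> : (fun x => (M x *m B) i j) = (fun x => \sum_k M x i k * B k j).
  by apply/funext => x; rewrite mxE.
by apply: cont_sum => k; apply: cont_mul; [exact: hM | exact: cont_cst].
Qed.

Lemma cont_ln_max (R : realType) (T : topologicalType) (f : T -> R) (dl : R) :
  0 < dl -> continuous f -> continuous (fun x => ln (Num.max (f x) dl)).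
Proof.
move=> dp hf x.
have h1 : {for x, continuous (fun y => Num.max (f y) dl)}.
  exact: (cont_max hf (@cont_cst R T dl)).
have h2 : {for (Num.max (f x) dl), continuous (@ln R)}.
  by apply: continuous_ln; by rewrite lt_max dp orbT.
exact: (continuous_comp h1 h2).
Qed.

Lemma closed_le_fun (R : realType) (T : topologicalType) (f g : T -> R) :
  continuous f -> continuous g -> closed [set x | f x <= g x].
Proof.
move=> hf hg.
have -> : [set x | f x <= g x] = (fun x => g x - f x) @^-1` [set y | 0 <= y].
  by apply/seteqP; split => x /=; rewrite subr_ge0.
apply: preimage_closed; last exact: closed_ge.
move=> x _; exact: (cont_add hg (cont_opp hf)).
Qed.

Lemma closed_forall (T : topologicalType) (I : Type) (P : I -> T -> Prop) :
  (forall i, closed [set x | P i x]) -> closed [set x | forall i, P i x].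
Proof.
move=> hP.
have -> : [set x | forall i, P i x] = \bigcap_(i in [set: I]) [set x | P i x].
  by apply/seteqP; split => x /= h i; [move=> _; exact: h | exact: h].
by apply: closed_bigI => i _; exact: hP.
Qed.

Lemma closed_and (T : topologicalType) (P Q : T -> Prop) :
  closed [set x | P x] -> closed [set x | Q x] -> closed [set x | P x /\ Q x].
Proof. by move=> hP hQ; exact: (closedI hP hQ). Qed.

Lemma closed_impl (T : topologicalType) (b : bool) (P : T -> Prop) :
  closed [set x | P x] -> closed [set x | b -> P x].
Proof.
move=> hP; case: b.
  have -> : [set x | true -> P x] = [set x | P x].
    by apply/seteqP; split => x /=; [apply | move=> h _].
  exact: hP.
have -> : [set x : T | false -> P x] = setT by apply/seteqP; split.
exact: closedT.
Qed.

Lemma closed_eq_fun (R : realType) (T : topologicalType) (f g : T -> R) :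
  continuous f -> continuous g -> closed [set x | f x = g x].
Proof.
move=> hf hg.
have -> : [set x | f x = g x] = [set x | f x <= g x /\ g x <= f x].
  by apply/seteqP; split => x /=; [move=> -> | move=> [h1 h2]; apply/eqP; rewrite eq_le h1 h2].
by apply: closed_and; apply: closed_le_fun.
Qed.

Lemma le_sum1 (R : realType) d (F : 'I_d -> R) i :
  (forall i, 0 <= F i) -> F i <= \sum_i0 F i0.
Proof.
move=> F0; rewrite (bigD1 i) //= lerDl; exact: sumr_ge0.
Qed.

Lemma pd_one (R : realType) d : pdmx (1%:M : 'M[R]_d).
Proof.
split; first exact: trmx1.
move=> x xn0; rewrite mulmx1 mxE lt_def; apply/andP; split; last first.
  by apply: sumr_ge0 => k _; rewrite mxE -expr2 sqr_ge0.
apply: contraNN xn0 => /eqP /psumr_eq0P h; apply/eqP/matrixP => k j.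
rewrite (ord1 j) [RHS]mxE.
have h0 : forall i : 'I_d, true -> 0 <= x^T 0 i * x i 0.
  by move=> i _; rewrite mxE -expr2 sqr_ge0.
by have := h h0 k isT; rewrite mxE -expr2 => /eqP; rewrite sqrf_eq0 => /eqP.
Qed.

Lemma real_exists (R : realType) d (S : 'M[R]_d) (a b : 'I_d -> 'I_d -> R)
  (pu pl : 'I_d -> 'I_d -> bool)
  (hS : psdmx S) (hdiag : forall i, 0 < S i i)
  (ap : forall i j, 0 < a i j) (bp : forall i j, 0 < b i j) :
  exists K, [/\ pdmx K, inC pu pl K &
    forall K', pdmx K' -> inC pu pl K' -> Fr S a b K <= Fr S a b K'].
Proof.
have [t [t0 t1 ta tb]] := exists_t S ap bp.
set F0 := Fr S a b 1%:M.
set B0 := F0 - \sum_i (1 + ln (t * S i i / 2)).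
set beta := \sum_i (2 * `|B0| / (t * S i i)).
set dl := expR (- F0).
have dlp : 0 < dl := expR_gt0 _.
have cp i : 0 < t * S i i / 2 by rewrite divr_gt0 // mulr_gt0.
have bounds K : pdmx K -> Fr S a b K <= F0 -> dl <= \det K /\ forall i, K i i <= beta.
  move=> hK hF; have [h1 h2] := Fr_lower hS hdiag ap bp t0 t1 ta tb hK.
  have Kp := pd_diag_gt0 hK.
  split.
    have dp := pd_det_gt0 hK.
    by rewrite -[\det K]lnK ?posrE // ler_expR; lra.
  move=> i.
  have hs : \sum_i (t * S i i / 2 * K i i) <= B0 by rewrite /B0; lra.
  have hi : t * S i i / 2 * K i i <= B0.
    apply: le_trans hs; apply: (le_sum1 (F := fun i => t * S i i / 2 * K i i)) => j.
    by rewrite mulr_ge0 // ltW.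
  have : K i i <= 2 * `|B0| / (t * S i i).
    have tsp : 0 < t * S i i by rewrite mulr_gt0.
    rewrite ler_pdivlMr //.
    have : B0 <= `|B0| := ler_norm B0.
    lra.
  move/le_trans; apply; apply: (le_sum1 (F := fun i => 2 * `|B0| / (t * S i i))) => j.
  by rewrite divr_ge0 ?mulr_ge0 // ltW // mulr_gt0.
pose Amx (K : 'M[R]_d) := (forall i j, K i j = K j i) /\
  ((forall x : 'cV[R]_d, 0 <= (x^T *m K *m x) ord0 ord0) /\
  (dl <= \det K /\ ((forall i, K i i <= beta) /\ inC pu pl K))).
have Apd K : Amx K -> pdmx K.
  move=> [hs [hq [hd _]]]; apply: psd_det_pd.
    by split => //; apply/matrixP => i j; rewrite mxE hs.
  by rewrite gt_eqF // (lt_le_trans dlp hd).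
pose G (K : 'M[R]_d) := - ln (Num.max (\det K) dl) + \tr (S *m K) + pen a b K.
have GF K : Amx K -> G K = Fr S a b K.
  by move=> [_ [_ [hd _]]]; rewrite /G /Fr (max_idPl hd).
have AK K : pdmx K -> inC pu pl K -> Fr S a b K <= F0 -> Amx K.
  move=> hK hC hF; have [bd1 bd2] := bounds K hK hF.
  split; first by move=> i j; rewrite -[in LHS]hK.1 mxE.
  by split; [exact: (pd_psd hK).2 | split].
have A1 : Amx 1%:M.
  apply: AK; [exact: pd_one | | exact: le_refl].
  by move=> i j ij; rewrite mxE (negbTE ij) /=; split.
pose Arv := [set v : 'rV[R]_(d * d) | Amx (vec_mx v)].
have ce i j : continuous (fun v : 'rV[R]_(d * d) => vec_mx v i j).
  have -> : (fun v : 'rV[R]_(d * d) => vec_mx v i j) = (fun v => v ord0 (mxvec_index i j)).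
    by apply/funext => v; rewrite mxE.
  exact: coord_continuous.
have Acl : closed Arv.
  rewrite /Arv /Amx.
  apply: closed_and.
    apply: closed_forall => i; apply: closed_forall => j.
    by apply: closed_eq_fun; apply: ce.
  apply: closed_and.
    apply: closed_forall => x; apply: closed_le_fun; first exact: cont_cst.
    by apply: cont_mulmxr; apply: cont_mulmxl.
  apply: closed_and.
    by apply: closed_le_fun; [exact: cont_cst | exact: cont_det].
  apply: closed_and.
    apply: closed_forall => i; apply: closed_le_fun; [exact: ce | exact: cont_cst].
  rewrite /inC; apply: closed_forall => i; apply: closed_forall => j.
  apply: closed_impl; apply: closed_and; apply: closed_impl.
    by apply: closed_le_fun; [exact: ce | exact: cont_cst].
  by apply: closed_le_fun; [exact: cont_cst | exact: ce].
pose Bx := [set v : 'rV[R]_(d * d) | forall k, (`[- beta, beta]%classic : set R) (v ord0 k)].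
have Bc : compact Bx.
  by apply: (@rV_compact _ _ (fun=> `[- beta, beta]%classic)) => _; exact: segment_compact.
have AB : Arv `<=` Bx.
  move=> v Av k; have hK := Apd _ Av; have hp := pd_psd hK.
  case: (mxvec_indexP k) => i j.
  have -> : v ord0 (mxvec_index i j) = vec_mx v i j by rewrite mxE.
  move: Av => [_ [_ [_ [hb _]]]].
  have := psd_offdiag i j hp; have := hb i; have := hb j.
  rewrite /= in_itv /= -ler_norml => h1 h2 h3; lra.
have Acomp : compact Arv by apply: subclosed_compact Acl Bc AB.
have An0 : Arv !=set0 by exists (mxvec 1%:M); rewrite /Arv /= mxvecK.
have Gc : continuous (fun v : 'rV[R]_(d * d) => G (vec_mx v)).
  rewrite /G; apply: cont_add; first apply: cont_add.
  - by apply: cont_opp; apply: cont_ln_max => //; exact: cont_det.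
  - by rewrite /mxtrace; apply: cont_sum => i; apply: cont_mulmxl.
  - rewrite /pen; apply: cont_sum => i; apply: cont_sum => j.
    apply: cont_add; apply: cont_mul; try exact: cont_cst.
      by apply: cont_max; [exact: ce | exact: cont_cst].
    by apply: cont_max; [apply: cont_opp; exact: ce | exact: cont_cst].
have [c cA cmin] := compact_EVT_min An0 Acomp (continuous_subspaceT Gc).
have Ac : Amx (vec_mx c) by move: cA; rewrite in_setE.
exists (vec_mx c); split; first exact: Apd.
  by case: Ac => _ [_ [_ [_ ?]]].
move=> K' hK' hC.
have hmin K : Amx K -> Fr S a b (vec_mx c) <= Fr S a b K.
  move=> AK0; rewrite -(GF _ Ac) -(GF _ AK0).
  have := cmin (mxvec K); rewrite mxvecK; apply.
  by rewrite in_setE /Arv /= mxvecK.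
have [hle|hgt] := lerP (Fr S a b K') F0.
  exact: hmin (AK _ hK' hC hle).
apply: le_trans (ltW hgt); exact: hmin A1.
Qed.

Lemma max_mid (R : realType) (x y : R) :
  Num.max (2^-1 * (x + y)) 0 <= 2^-1 * (Num.max x 0 + Num.max y 0).
Proof.
have hx : x <= Num.max x 0 by rewrite le_max lexx.
have hx0 : 0 <= Num.max x 0 by rewrite le_max lexx orbT.
have hy : y <= Num.max y 0 by rewrite le_max lexx.
have hy0 : 0 <= Num.max y 0 by rewrite le_max lexx orbT.
rewrite ge_max; apply/andP; split; lra.
Qed.

Lemma pen_mid (R : realType) d (a b : 'I_d -> 'I_d -> R) (A B : 'M[R]_d) :
  (forall i j, 0 <= a i j) -> (forall i j, 0 <= b i j) ->
  pen a b (2^-1 *: (A + B)) <= 2^-1 * (pen a b A + pen a b B).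
Proof.
move=> a0 b0; rewrite /pen -big_split mulr_sumr; apply: ler_sum => i _.
rewrite -big_split mulr_sumr; apply: ler_sum => j _ /=.
rewrite !mxE.
have h1 := max_mid (A i j) (B i j).
have h2 := max_mid (- A i j) (- B i j).
have e : - (2^-1 * (A i j + B i j)) = 2^-1 * (- A i j + - B i j) by ring.
rewrite e.
have := ler_wpM2l (a0 i j) h1; have := ler_wpM2l (b0 i j) h2.
lra.
Qed.

Lemma Fr_mid (R : realType) d (S : 'M[R]_d) (a b : 'I_d -> 'I_d -> R) (A B : 'M[R]_d) :
  (forall i j, 0 <= a i j) -> (forall i j, 0 <= b i j) ->
  pdmx A -> pdmx B -> A != B ->
  Fr S a b (2^-1 *: (A + B)) < 2^-1 * (Fr S a b A + Fr S a b B).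
Proof.
move=> a0 b0 hA hB AB.
have h1 := logdet_strict hA hB AB.
have h2 := pen_mid A B a0 b0.
have h3 : \tr (S *m (2^-1 *: (A + B))) = 2^-1 * (\tr (S *m A) + \tr (S *m B)).
  by rewrite -scalemxAr mxtraceZ mulmxDr mxtraceD.
rewrite /Fr h3; lra.
Qed.

Lemma inC_mid (R : realType) d (pu pl : 'I_d -> 'I_d -> bool) (A B : 'M[R]_d) :
  inC pu pl A -> inC pu pl B -> inC pu pl (2^-1 *: (A + B)).
Proof.
move=> hA hB i j ij; have [hA1 hA2] := hA i j ij; have [hB1 hB2] := hB i j ij.
rewrite !mxE; split => h.
  by have := hA1 h; have := hB1 h; lra.
by have := hA2 h; have := hB2 h; lra.
Qed.

Lemma real_unique (R : realType) d (S : 'M[R]_d) (a b : 'I_d -> 'I_d -> R)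
  (pu pl : 'I_d -> 'I_d -> bool)
  (a0 : forall i j, 0 <= a i j) (b0 : forall i j, 0 <= b i j) (K1 K2 : 'M[R]_d) :
  pdmx K1 -> inC pu pl K1 -> pdmx K2 -> inC pu pl K2 ->
  (forall K', pdmx K' -> inC pu pl K' -> Fr S a b K1 <= Fr S a b K') ->
  (forall K', pdmx K' -> inC pu pl K' -> Fr S a b K2 <= Fr S a b K') ->
  K1 = K2.
Proof.
move=> h1 c1 h2 c2 m1 m2; apply/eqP; apply/negPn/negP => ne.
have := Fr_mid S a0 b0 h1 h2 ne.
have := m1 _ (pd_mid h1 h2) (inC_mid c1 c2).
have := m1 _ h2 c2; have := m2 _ h1 c1.
lra.
Qed.

Definition ucoef (R : realType) (e : \bar R) : R :=
  if e is r%:E then (if 0 < r then r else 1) else 1.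

Lemma maxpos (R : realType) (x : R) : 0 < x -> Num.max x 0 = x /\ Num.max (- x) 0 = 0.
Proof. by move=> x0; split; [apply/max_idPl/ltW | apply/max_idPr; rewrite oppr_le0 ltW]. Qed.
Lemma maxneg (R : realType) (x : R) : x < 0 -> Num.max x 0 = 0 /\ Num.max (- x) 0 = - x.
Proof. by move=> x0; split; [apply/max_idPr/ltW | apply/max_idPl; rewrite oppr_ge0 ltW]. Qed.

Lemma pe_val (R : realType) (l u : \bar R) (x : R) : (l < 0)%E -> (0 < u)%E ->
  (maxe (l * x%:E) (u * x%:E))%E =
  if ((u == +oo%E) && (0 < x)) || ((l == -oo%E) && (x < 0)) then +oo%E
  else (ucoef u * Num.max x 0 + ucoef (- l) * Num.max (- x) 0)%:E.
Proof.
case: l => [l| |] //; case: u => [u| |] // hl hu; rewrite ?lte_fin in hl hu;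
  rewrite /ucoef /= ?hu ?oppr_gt0 ?hl /=;
  (have [x0|x0|->] := ltrgt0P x; [have [m1 m2] := maxpos x0; have x0' : (0 < x%:E)%E by rewrite lte_fin
     | have [m1 m2] := maxneg x0; have x0' : (x%:E < 0)%E by rewrite lte_fin |]);
  rewrite ?m1 ?m2 ?x0 ?(ltW x0) ?oppr0 ?maxxx ?mule0 /= ?maxxx //.
all: rewrite ?(gt0_mulye x0') ?(lt0_mulye x0') ?(gt0_mulNye x0') ?(lt0_mulNye x0') //
  ?maxye ?maxey ?maxeNy ?maxNye -?EFinM -?EFin_max //.
- by rewrite (max_idPr (_ : l * x <= u * x)) ?mulr0 ?addr0 //; nra.
- by rewrite (max_idPl (_ : u * x <= l * x)) ?mulr0 ?add0r ?mulrNN //; nra.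
all: by rewrite ?mulr0 ?mul1r ?addr0 ?add0r ?mulrNN.
Qed.

Lemma ucoef_gt0 (R : realType) (e : \bar R) : 0 < ucoef e.
Proof. by case: e => [r| |] //=; case: ifP. Qed.

Lemma pe_ge0 (R : realType) (l u : \bar R) (x : R) : (l < 0)%E -> (0 < u)%E ->
  (0 <= maxe (l * x%:E) (u * x%:E))%E.
Proof.
move=> hl hu; rewrite pe_val //; case: ifP => _ //.
have h1 : 0 <= Num.max x 0 by rewrite le_max lexx orbT.
have h2 : 0 <= Num.max (- x) 0 by rewrite le_max lexx orbT.
by rewrite lee_fin addr_ge0 // mulr_ge0 // ltW // ucoef_gt0.
Qed.

Lemma sum_inf (R : realType) d (P : 'I_d -> 'I_d -> bool) (f : 'I_d -> 'I_d -> \bar R) i0 j0 :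
  (forall i j, P i j -> (0 <= f i j)%E) -> P i0 j0 -> f i0 j0 = +oo%E ->
  (\sum_i \sum_(j | P i j) f i j)%E = +oo%E.
Proof.
move=> f0 hP hf.
have s1 : (0 <= \sum_(j | P i0 j && (j != j0)) f i0 j)%E.
  by apply: sume_ge0 => j /andP[hj _]; exact: f0.
have s2 : (0 <= \sum_(i | i != i0) \sum_(j | P i j) f i j)%E.
  by apply: sume_ge0 => i _; apply: sume_ge0 => j; exact: f0.
rewrite (bigD1 i0) //= (bigD1 j0) //= hf addye ?addye //.
  by rewrite gt_eqF // (lt_le_trans ltNy0 s2).
by rewrite gt_eqF // (lt_le_trans ltNy0 s1).
Qed.

Lemma gen_fin (R : realType) d (S : 'M[R]_d) (L U : 'M[\bar R]_d)
  (hLU : forall i j, i != j -> (L i j < 0)%E /\ (0 < U i j)%E) (K : 'M[R]_d) :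
  inC (fun i j => U i j == +oo%E) (fun i j => L i j == -oo%E) K ->
  gen_obj S L U K = (Fr S (fun i j => ucoef (U i j)) (fun i j => ucoef (- L i j)) K)%:E.
Proof.
move=> hC; rewrite /gen_obj /Fr [in RHS]EFinD; congr (_ + _)%E.
rewrite /pen -sumEFin; apply: eq_bigr => i _; rewrite -sumEFin; apply: eq_bigr => j ij.
have [h1 h2] := hLU i j ij; rewrite pe_val //.
have [c1 c2] := hC i j ij.
case: ifP => // /orP [] /andP [e1 e2].
  by have := c1 e1; rewrite leNgt e2.
by have := c2 e1; rewrite leNgt e2.
Qed.

Lemma gen_inf (R : realType) d (S : 'M[R]_d) (L U : 'M[\bar R]_d)
  (hLU : forall i j, i != j -> (L i j < 0)%E /\ (0 < U i j)%E) (K : 'M[R]_d) :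
  ~ inC (fun i j => U i j == +oo%E) (fun i j => L i j == -oo%E) K ->
  gen_obj S L U K = +oo%E.
Proof.
move=> hC.
have [i [j [ij hij]]] : exists i j, i != j /\
    ((U i j == +oo%E) && (0 < K i j)) || ((L i j == -oo%E) && (K i j < 0)).
  apply: contrapT => hn; apply: hC => i j ij; split => h.
    rewrite leNgt; apply/negP => hK; apply: hn; exists i, j; split => //.
    by rewrite h hK.
  rewrite leNgt; apply/negP => hK; apply: hn; exists i, j; split => //.
  by rewrite h hK orbT.
rewrite /gen_obj (@sum_inf _ _ (fun i j => i != j) _ i j) ?addey //.
  move=> i0 j0 ij0; have [h1 h2] := hLU i0 j0 ij0; exact: pe_ge0.
have [h1 h2] := hLU i j ij; rewrite pe_val // hij //.
Qed.

Lemma part2 (R : realType) (d : nat) (S : 'M[R]_d)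
  (hS : psdmx S) (hdiag : forall i : 'I_d, 0 < S i i) (L U : 'M[\bar R]_d) :
  (forall i j, i != j -> (L i j < 0)%E /\ (0 < U i j)%E) ->
  exists! K : 'M[R]_d, pdmx K /\
    forall K' : 'M[R]_d, pdmx K' -> (gen_obj S L U K <= gen_obj S L U K')%E.
Proof.
move=> hLU.
set a := fun i j => ucoef (U i j); set b := fun i j => ucoef (- L i j).
set pu := fun i j => U i j == +oo%E; set pl := fun i j => L i j == -oo%E.
have ap i j : 0 < a i j by exact: ucoef_gt0.
have bp i j : 0 < b i j by exact: ucoef_gt0.
have [K [hK hC hmin]] := real_exists pu pl hS hdiag ap bp.
have GK : gen_obj S L U K = (Fr S a b K)%:E by exact: gen_fin.
exists K; split.
  split => // K' hK'.
  have [hC'|hC'] := pselect (inC pu pl K').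
    by rewrite GK (gen_fin S hLU hC') lee_fin; exact: hmin.
  by rewrite (gen_inf S hLU hC') leey.
move=> K2 [hK2 hmin2].
have hC2 : inC pu pl K2.
  apply: contrapT => hn; have := hmin2 K hK.
  by rewrite (gen_inf S hLU hn) GK leye_eq.
have a0 : forall i j, 0 <= a i j by move=> i j; exact: ltW.
have b0 : forall i j, 0 <= b i j by move=> i j; exact: ltW.
apply: (real_unique a0 b0 hK hC hK2 hC2 hmin).
move=> K' hK' hC'; have := hmin2 K' hK'.
by rewrite (gen_fin S hLU hC2) (gen_fin S hLU hC') lee_fin.
Qed.

Lemma glasso_gen (R : realType) d (S : 'M[R]_d) (rho : R) (K : 'M[R]_d) : 0 < rho ->
  gen_obj S (\matrix_(i, j) (if i == j then 0%E else (- rho)%:E))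
            (\matrix_(i, j) (if i == j then 0%E else rho%:E)) K
  = (glasso_obj S rho K)%:E.
Proof.
move=> rp; rewrite /gen_obj /glasso_obj [in RHS]EFinD; congr (_ + _)%E.
rewrite mulr_sumr -sumEFin; apply: eq_bigr => i _.
rewrite mulr_sumr -sumEFin; apply: eq_bigr => j ij.
rewrite !mxE (negbTE ij) -!EFinM -EFin_max; congr EFin.
by rewrite mulNr maxNr normrM gtr0_norm.
Qed.

Local Close Scope classical_set_scope.

Theorem theorem8p7 (R : realType) (d : nat) (S : 'M[R]_d)
  (hS : psdmx S) (hdiag : forall i : 'I_d, 0 < S i i) :
  (forall rho : R, 0 < rho ->
     exists! K : 'M[R]_d, pdmx K /\
       forall K' : 'M[R]_d, pdmx K' -> glasso_obj S rho K <= glasso_obj S rho K')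
  /\
  (forall L U : 'M[\bar R]_d,
     (forall i j, L i j = L j i) -> (forall i j, U i j = U j i) ->
     (forall i, L i i = 0%E /\ U i i = 0%E) ->
     (forall i j, i != j -> (L i j < 0)%E /\ (0 < U i j)%E) ->
     exists! K : 'M[R]_d, pdmx K /\
       forall K' : 'M[R]_d, pdmx K' -> (gen_obj S L U K <= gen_obj S L U K')%E).
Proof.
split; last by move=> L U _ _ _ hLU; exact: part2.
move=> rho rp.
have hLU : forall i j : 'I_d, i != j ->
    ((\matrix_(i, j) (if i == j then 0%E else (- rho)%:E)) i j < 0)%E /\
    (0 < (\matrix_(i, j) (if i == j then 0%E else rho%:E)) i j)%E.
  move=> i j ij; rewrite !mxE (negbTE ij) !lte_fin; split => //.
  by rewrite oppr_lt0.
have [K [[hK hmin] huniq]] := part2 hS hdiag hLU.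
exists K; split.
  split => // K' hK'; have := hmin K' hK'; by rewrite !glasso_gen // lee_fin.
move=> K2 [hK2 hmin2]; apply: huniq; split => // K' hK'.
by rewrite !glasso_gen // lee_fin; exact: hmin2.
Qed.
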